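(* Let $n\geqslant 3$, let $S$ be a caterpillar species tree with canonical label vector $(s_1,\dots,s_n)$, and let $k_s,k_\ell\in\{1,\dots,n\}$ with $k_s<k_\ell$ and $k_\ell\neq 2$. Let $G$ be the caterpillar gene tree obtained from $S$ by forward incrementation on positions $k_s,\dots,k_\ell$, i.e. with canonical label vector $(g_1,\dots,g_n)$ given by $g_{k_s}=s_{k_\ell}$, $g_k=s_{k-1}$ for $k_s<k\leqslant k_\ell$, and $g_k=s_k$ for $k\notin\{k_s,\dots,k_\ell\}$. Then the roadblock set $B_{G,S}$ consists of a triangle of lattice points on and below the diagonal, i.e. $B_{G,S}=\{(i,j): a\leqslant j\leqslant i\leqslant b\}$ for some integers $a\leqslant b$.
   Context: All trees are binary, rooted, leaf-labeled. A caterpillar tree with $n$ leaves is one in which some internal node is descended from all other internal nodes. Its canonical label vector $(x_1,\dots,x_n)$ has $x_1,x_2$ the labels of the two leaves of the cherry (unique internal node with two descendant leaves) and, for $3\leqslant i\leqslant n$, $x_i$ the label of the leaf separated from the root by $n-i+1$ edges; vectors differing only by swapping $x_1,x_2$ describe the same tree. For caterpillars $G,S$ with canonical vectors $\mathbf g,\mathbf s$, let $\sigma(x)$ be the index of label $x$ in $\mathbf s$, $F(j)=\max\{\sigma(g_1),\dots,\sigma(g_{j+1})\}-1$ for $1\leqslant j\leqslant n-1$, and define the roadblock set $B_{G,S}=\{(i,j)\in\mathbb Z^2:1\leqslant j\leqslant i\leqslant n-1,\ i<F(j)\}$. *)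

(* Defs.v *)
From mathcomp Require Import all_boot all_algebra.
Set Implicit Arguments. Unset Strict Implicit. Unset Printing Implicit Defensive.

(* Canonical label vectors are represented as sequences of labels:
   the 1-based entry x_k of a vector v is  nth x0 v k.-1  (x0 an arbitrary
   default, irrelevant for in-range indices). *)

Definition sigma (T : eqType) (s : seq T) (x : T) : nat := (index x s).+1.

Definition Fmap (T : eqType) (x0 : T) (s g : seq T) (j : nat) : nat :=
  (\max_(1 <= k < j.+2) sigma s (nth x0 g k.-1)) - 1.

Definition roadblock (T : eqType) (x0 : T) (n : nat) (s g : seq T)
    (i j : int) : bool :=
  [&& (1 <= j)%R, (j <= i)%R, (i <= (n.-1)%:Z)%R &
      (i < (Fmap x0 s g `|j|%N)%:Z)%R].

(* Main.v *)
Require Import Defs.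
From mathcomp Require Import all_boot all_algebra.
From mathcomp Require Import zify.

Theorem proposition8 (T : eqType) (x0 : T) (n : nat) (s g : seq T)
    (ks kl : nat) :
  3 <= n ->
  size s = n -> uniq s ->
  1 <= ks -> ks < kl -> kl <= n -> kl != 2 ->
  size g = n ->
  (forall k, 1 <= k <= n ->
     nth x0 g k.-1 =
       if k == ks then nth x0 s kl.-1
       else if ks < k <= kl then nth x0 s k.-2
       else nth x0 s k.-1) ->
  exists a b : int, (a <= b)%R /\
    forall i j : int,
      roadblock x0 n s g i j = [&& (a <= j)%R, (j <= i)%R & (i <= b)%R].
Proof.
move=> n3 hs us ks1 kskl kln kl2 hgs hg.
have sig : forall m, 1 <= m <= n -> sigma s (nth x0 g m.-1) =
   if m == ks then kl else if ks < m <= kl then m.-1 else m.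
  move=> m hm; rewrite (hg m hm) /sigma.
  case: ifP => [/eqP h0|h1]; first by rewrite index_uniq ?hs; lia.
  case: ifP => h2; rewrite index_uniq ?hs; lia.
have pm : forall m, m <= n -> \max_(1 <= k < m.+1) sigma s (nth x0 g k.-1)
   = if ks <= m <= kl then kl else m.
  elim=> [|m IH] hm; first by rewrite big_geq //; case: ifP => //; lia.
  rewrite big_nat_recr //= IH; last lia.
  rewrite (sig m.+1); last lia.
  by repeat (case: ifP => ?); lia.
have Fm : forall j, j.+1 <= n -> Fmap x0 s g j = (if ks <= j.+1 <= kl then kl else j.+1) - 1.
  by move=> j hj; rewrite /Fmap pm.
exists (Posz (maxn 1 ks.-1)), (Posz kl.-2); split.
  rewrite lez_nat; lia.
move=> i j; rewrite /roadblock.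
case: j => [j|j]; last first.
  rewrite NegzE.
  have -> : (1 <= - (j.+1)%:Z)%R = false by apply: negbTE; lia.
  by have -> : ((maxn 1 ks.-1)%:Z <= - (j.+1)%:Z)%R = false by apply: negbTE; move: (maxn 1 ks.-1) => a; lia.
case: i => [i|i]; last first.
  rewrite NegzE.
  have -> : (Posz j <= - (i.+1)%:Z)%R = false by apply: negbTE; lia.
  by rewrite andFb !andbF.
rewrite !lez_nat ltz_nat /=.
have [hj|hj] := leqP j.+1 n.
  rewrite Fm //; case: ifP => h; apply/idP/idP.
  - case/and4P=> *; apply/and3P; split; lia.
  - case/and3P=> *; apply/and4P; split; lia.
  - case/and4P=> *; apply/and3P; split; lia.
  - case/and3P=> *; apply/and4P; split; lia.
by apply/idP/idP => [/and4P[] | /and3P[]]; lia.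
Qed.
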